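(* Let $d\ge 1$ be fixed, let $p_1,\ldots,p_d$ be fixed (not necessarily distinct) primes, and for $k\ge 1$ let $\Gamma\cong\prod_{i=1}^d \mathbb{Z}_{p_i^k}$. Then, as $k\to\infty$, \[\Pr_{1/2}(\Gamma)\le k^d\exp\left[\left(\frac{(d+1)!\prod_{i=1}^d\lg p_i}{2}\,\lg k\right)^{\frac{1}{d+1}}-\left(\frac{d}{d+1}\right)\lg\lg k+O(1)\right],\] where the $O(1)$ term is bounded by a constant independent of $k$.
   Context: For a finite additive group $\Gamma$, a sequence $S=(g_1,\ldots,g_t)$ of elements of $\Gamma$ is a zero-sum sequence if $g_1+\cdots+g_t=0_\Gamma$. The cross number of $S$ is $\sum_{i=1}^t 1/|g_i|$, where $|g_i|$ is the order of $g_i$ in $\Gamma$. A sequence $S$ is called good if it contains a zero-sum subsequence whose cross number is at most $1$. A random sequence of length $t$ is a sequence $(a_1,\ldots,a_t)$ chosen with equal probability among all length-$t$ sequences of elements of $\Gamma$; let $\mathbb{E}_\Gamma(t)$ be the event that it is good. Define $\Pr_{1/2}(\Gamma)=\min\{t:\Pr[\mathbb{E}_\Gamma(t)]\ge 1/2\}$. Here $\lg$ denotes the base-2 logarithm and $\exp$ the natural exponential. *)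

(* Defs.v *)
From HB Require Import structures.
From mathcomp Require Import all_boot all_order all_algebra all_fingroup.
From mathcomp Require Import reals sequences exp.
From mathcomp Require Import cyclic zify.
Set Implicit Arguments. Unset Strict Implicit. Unset Printing Implicit Defensive.
Import Order.TTheory GRing.Theory Num.Theory.

HB.instance Definition _ (A B : finZmodType) := GRing.Zmodule.on (A * B)%type.

(* prodZ n [:: m1; ...; mr] = Z_n x Z_m1 x ... x Z_mr (moduli assumed >= 2). *)
Fixpoint prodZ (n : nat) (s : seq nat) : finZmodType :=
  match s with
  | [::] => 'Z_n
  | m :: s' => ('Z_n * prodZ m s')%type : finZmodType
  end.

Definition Gamma (p : nat) (ps : seq nat) (k : nat) : finZmodType :=
  prodZ (p ^ k) (map (fun q => q ^ k) ps).

Section Good.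
Variable G : finZmodType.
Local Open Scope ring_scope.

(* A sequence of length t is a map 'I_t -> G; subsequences are index sets.
   #[g]%g is the order of g in the (additive) group G. *)
Definition cross_number (t : nat) (a : {ffun 'I_t -> G}) (I : {set 'I_t}) : rat :=
  \sum_(i in I) (#[a i]%g%:R)^-1.

Definition good (t : nat) (a : {ffun 'I_t -> G}) : bool :=
  [exists I : {set 'I_t},
     [&& I != set0, \sum_(i in I) a i == 0 & cross_number a I <= 1]].

Definition prob_good (t : nat) : rat :=
  #|[set a : {ffun 'I_t -> G} | good a]|%:R / #|{ffun 'I_t -> G}|%:R.

Definition half_pred : pred nat := fun t => (1 / 2 <= prob_good t).

Lemma good_large (t : nat) (a : {ffun 'I_t -> G}) : (#|G| * #|G| <= t)%N -> good a.
Proof.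
move=> Htl.
have G0 : (0 < #|G|)%N by apply/card_gt0P; exists 0.
have [g Hg] : exists g : G, (#|G| <= #|[set i | a i == g]|)%N.
  apply/existsP; apply/negP => /existsP Hn.
  have Hlt : forall g : G, (#|[set i | a i == g]| <= #|G|.-1)%N.
    move=> g; rewrite -ltnS prednK // ltnNge; apply/negP => H; apply: Hn.
    by exists g.
  have Ht : (\sum_(g : G) #|[set i | a i == g]| = #|'I_t|)%N.
    rewrite -sum1_card (partition_big (fun i => a i) predT) //=.
    by apply: eq_bigr => g _; rewrite -sum1_card; apply: eq_bigl => i; rewrite inE.
  rewrite card_ord in Ht.
  have H2 : (\sum_(g : G) #|[set i | a i == g]| <= \sum_(g : G) #|G|.-1)%N.
    by apply: leq_sum => g _; exact: Hlt g.
  rewrite Ht sum_nat_const in H2.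
  have HT : #|[pred g : G | true]| = #|G| by apply: eq_card.
  rewrite HT in H2; move: H2 Htl G0; case: #|G| => // n H2 Htl _; nia.
set S := [set i | a i == g] in Hg.
set o := #[g]%g.
have o0 : (0 < o)%N by apply: order_gt0.
have oG : (o <= #|G|)%N.
  by apply: dvdn_leq => //; rewrite -cardsT; apply: order_dvdG; rewrite inE.
pose I := [set i in take o (enum S)].
have cI : #|I| = o.
  have u : uniq (take o (enum S)) by rewrite take_uniq // enum_uniq.
  rewrite cardsE (card_uniqP u) size_take -cardE.
  by case: ltngtP => //; lia.
have IS : forall i, i \in I -> a i = g.
  move=> i; rewrite inE => /mem_take; rewrite mem_enum inE.
  by move/eqP.
apply/existsP; exists I; apply/and3P; split.
- by apply/set0Pn/card_gt0P; rewrite cI.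
- rewrite (eq_bigr (fun _ => g)) // sumr_const cI -FinRing.zmodXgE.
  by rewrite /o expg_order.
- rewrite /cross_number (eq_bigr (fun _ => (o%:R)^-1)); last by move=> i /IS ->.
  by rewrite sumr_const cI -[_ *+ o]mulr_natl mulfV // pnatr_eq0 -lt0n.
Qed.

Lemma half_pred_ex : exists t, half_pred t.
Proof.
exists (#|G| * #|G|)%N; rewrite /half_pred /prob_good.
have -> : [set a : {ffun 'I_(#|G| * #|G|) -> G} | good a] = setT.
  by apply/setP => a; rewrite !inE good_large.
rewrite cardsT divff; first by rewrite ler_pdivrMr // mul1r ler1n.
by rewrite pnatr_eq0 -lt0n; apply/card_gt0P; exists [ffun=> 0].
Qed.

Definition Pr_half : nat := ex_minn half_pred_ex.

End Good.

Definition lg {R : realType} (x : R) : R := (ln x / ln 2)%R.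

(* Main.v *)
Require Import Defs.
From HB Require Import structures.
From mathcomp Require Import all_boot all_order all_algebra all_fingroup.
From mathcomp Require Import reals sequences exp.
Import Order.TTheory GRing.Theory Num.Theory.
Local Open Scope ring_scope.

Set Implicit Arguments. Unset Strict Implicit. Unset Printing Implicit Defensive.
From mathcomp Require Import ring lra zify.
Import Order.TTheory GRing.Theory Num.Theory.
Local Close Scope ring_scope.

Section Fiber.
Local Open Scope ring_scope.
Variables (A B : finZmodType) (f : A -> B).
Hypothesis fD : forall x y, f (x + y) = f x + f y.
Hypothesis fS : forall b, exists x, f x = b.

Lemma f0 : f 0 = 0.
Proof. by apply: (addrI (f 0)); rewrite -fD !addr0. Qed.
Lemma fN x : f (- x) = - f x.
Proof. by apply: (addrI (f x)); rewrite -fD !subrr f0. Qed.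

Lemma fiber_eq b : #|[set x | f x == b]| = #|[set x | f x == 0]|.
Proof.
have [u fu] := fS b.
have -> : [set x | f x == b] = [set x + u | x in [set x | f x == 0]].
  apply/setP => y; rewrite inE; apply/idP/imsetP.
  - move/eqP => fy; exists (y - u); last by rewrite subrK.
    by rewrite inE fD fN fy fu subrr.
  - by case=> x; rewrite inE => /eqP fx ->; rewrite fD fx fu add0r.
by rewrite card_imset //; apply: addIr.
Qed.

Lemma fiber_card b : (#|[set x | f x == b]| * #|B| = #|A|)%N.
Proof.
rewrite fiber_eq -[#|A|]sum1_card (partition_big f predT) //=.
rewrite (eq_bigr (fun _ => #|[set x | f x == 0]|)).
  by rewrite sum_nat_const mulnC; congr (_ * _)%N; apply: eq_card.
move=> b' _; rewrite -(fiber_eq b') -sum1_card; apply: eq_bigl => x.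
by rewrite inE.
Qed.

Lemma preim_card (S : {pred B}) :
  (#|[set x | f x \in S]| * #|B| = #|S| * #|A|)%N.
Proof.
rewrite -sum1_card (partition_big f (mem S)) //=; last by move=> x; rewrite inE.
rewrite big_distrl /= -(sum1_card S) big_distrl /=; apply: eq_bigr => b Hb.
rewrite -(fiber_card b) mul1n; congr (_ * _)%N; rewrite -sum1_card.
apply: eq_bigl => x; rewrite !inE; case: (f x =P b) => [->|]; by rewrite ?Hb ?andbF.
Qed.
End Fiber.

HB.instance Definition _ (G : finZmodType) (t : nat) := GRing.Zmodule.on {ffun 'I_t -> G}.

Section Seqs.
Local Open Scope ring_scope.
Variables (G : finZmodType) (t : nat).
Local Notation Om := {ffun 'I_t -> G}.
Definition sumI (I : {set 'I_t}) (a : Om) : G := \sum_(i in I) a i.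
Lemma sumID I a b : sumI I (a + b) = sumI I a + sumI I b.
Proof. by rewrite /sumI -big_split; apply: eq_bigr => i _; rewrite ffunE. Qed.
Definition delta (x : 'I_t) (g : G) : Om := [ffun i => if i == x then g else 0].
Lemma sum_delta I x g : sumI I (delta x g) = if x \in I then g else 0.
Proof.
rewrite /sumI; case: ifP => Hx.
- rewrite (bigD1 x) //= ffunE eqxx big1 ?addr0 // => i /andP[_ /negbTE Hi].
  by rewrite ffunE Hi.
- rewrite big1 // => i Hi; rewrite ffunE; case: eqP => // Ei.
  by rewrite -Ei Hi in Hx.
Qed.

Lemma count1 I : I != set0 -> (#|[set a : Om | sumI I a == 0%R]| * #|G| = #|G| ^ t)%N.
Proof.
case/set0Pn => x Hx.
have fS : forall g, exists a, sumI I a = g.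
  by move=> g; exists (delta x g); rewrite sum_delta Hx.
by rewrite (fiber_card (sumID I) fS) card_ffun card_ord.
Qed.

Lemma count2_aux (I J : {set 'I_t}) (i1 : 'I_t) : i1 \in I -> i1 \notin J -> J != set0 ->
  (#|[set a : Om | (sumI I a == 0%R) && (sumI J a == 0%R)]| * (#|G| * #|G|) = #|G| ^ t)%N.
Proof.
move=> HI HJ /set0Pn [j1 Hj1].
pose f (a : Om) : (G * G)%type := (sumI I a, sumI J a).
have fD : forall a b, f (a + b) = f a + f b by move=> a b; rewrite /f !sumID.
have fS : forall gh, exists a, f a = gh.
  case=> g h; exists (delta i1 (g - (if j1 \in I then h else 0)) + delta j1 h).
  rewrite /f !sumID !sum_delta HI (negbTE HJ) Hj1 add0r; congr pair.
  by case: ifP => _; rewrite ?subr0 ?addr0 ?subrK.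
have := fiber_card fD fS 0; rewrite card_prod card_ffun card_ord => <-.
by congr (_ * _)%N; apply: eq_card => a; rewrite !inE /f.
Qed.

Lemma count2 (I J : {set 'I_t}) : I != set0 -> J != set0 -> I != J ->
  (#|[set a : Om | (sumI I a == 0%R) && (sumI J a == 0%R)]| * (#|G| * #|G|) = #|G| ^ t)%N.
Proof.
move=> HI HJ HIJ.
case: (boolP (I \subset J)) => sIJ.
  have : ~~ (J \subset I) by apply: contra HIJ => sJI; rewrite eqEsubset sIJ sJI.
  case/subsetPn => j1 Hj1 Hj1'.
  rewrite -(count2_aux Hj1 Hj1' HI); congr (_ * _)%N.
  by apply: eq_card => a; rewrite !inE andbC.
case/subsetPn: sIJ => i1 Hi1 Hi1'.
exact: count2_aux Hi1 Hi1' HJ.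
Qed.
End Seqs.

From mathcomp Require Import ring lra zify.

Section SM.
Local Open Scope ring_scope.
Variables (G : finZmodType) (t : nat).
Local Notation Om := {ffun 'I_t -> G}.
Definition ind (I : {set 'I_t}) (a : Om) : rat := (sumI I a == 0)%:R.
Definition X (a : Om) : rat := \sum_(I : {set 'I_t} | I != set0) ind I a.
Local Notation n := (#|G|%:R : rat).
Local Notation N := ((#|G| ^ t)%N%:R : rat).
Local Notation M := (\sum_(I : {set 'I_t} | I != set0) (1 : rat)).

Lemma sum_ind (T : finType) (P : pred T) :
  \sum_(a : T) ((P a)%:R : rat) = (#|[set a | P a]|%:R)%R.
Proof.
rewrite -sum1_card natr_sum [RHS]big_mkcond; apply: eq_bigr => a _.
by rewrite inE; case: (P a).
Qed.


Lemma S1 : (\sum_a X a) * n = M * N.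
Proof.
rewrite /X exchange_big /= !mulr_suml; apply: eq_bigr => I HI.
by rewrite /ind sum_ind -natrM count1 // mul1r.
Qed.

Lemma S2 : (\sum_a X a ^+ 2) * n ^+ 2 = M * (N * n + (M - 1) * N).
Proof.
have E : forall a, X a ^+ 2 = \sum_(I | I != set0) \sum_(J | J != set0) ind I a * ind J a.
  by move=> a; rewrite expr2 /X big_distrlr.
under eq_bigr => a _ do rewrite E.
rewrite exchange_big /= mulr_suml mulr_suml.
apply: eq_bigr => I HI; rewrite mul1r exchange_big /=.
rewrite (bigD1 I) //= mulrDl.
have -> : \sum_a ind I a * ind I a = \sum_a ind I a.
  by apply: eq_bigr => a _; rewrite /ind; case: (_ == _); rewrite ?mulr1 ?mulr0.
rewrite /ind sum_ind expr2 mulrA -natrM count1 // -/(ind _ _).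
congr (_ + _).
rewrite (bigD1 I (P := fun J => J != set0)) //= addrC addrK.
rewrite !mulr_suml; apply: eq_bigr => J /andP [HJ HJI].
have -> : \sum_a ind I a * ind J a = \sum_(a : Om) (((sumI I a == 0) && (sumI J a == 0))%:R : rat).
  by apply: eq_bigr => a _; rewrite /ind -natrM mulnb.
by rewrite sum_ind -!natrM count2 // ?mul1r // eq_sym.
Qed.

Lemma sumN : \sum_(a : Om) (1 : rat) = N.
Proof. by rewrite sumr_const card_ffun card_ord. Qed.

Lemma Bad2 : 0 < M -> #|[set a : Om | X a == 0]|%:R * M <= N * n.
Proof.
move=> M0.
have H1 := S1; have H2 := S2.
set m := \sum_(I | I != set0) (1 : rat) in M0 H1 H2 *; clearbody m.
have V : \sum_(a : Om) (n * X a - m) ^+ 2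
    = n ^+ 2 * \sum_a X a ^+ 2 - 2 * n * m * \sum_a X a + m ^+ 2 * N.
  rewrite -sumN !mulr_sumr -sumrB -big_split /=; apply: eq_bigr => a _; ring.
have L : #|[set a : Om | X a == 0]|%:R * m ^+ 2 <= \sum_(a : Om) (n * X a - m) ^+ 2.
  rewrite (bigID (fun a => X a == 0)) /= -[X in X <= _]addr0 lerD //.
    rewrite (eq_bigr (fun _ => m ^+ 2)); last first.
      by move=> a /eqP ->; rewrite mulr0 sub0r sqrrN.
    rewrite (eq_bigl (fun a => a \in [set a : Om | X a == 0])); last first.
      by move=> a; rewrite inE.
    by rewrite sumr_const mulr_natl.
  by apply: sumr_ge0 => a _; exact: sqr_ge0.
have N0 : 0 <= N by [].
have n0 : 0 <= n by [].
have : #|[set a : Om | X a == 0]|%:R * m * m <= N * n * m.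
  rewrite -mulrA -expr2; apply: (le_trans L); rewrite V.
  nra.
by rewrite ler_pM2r.
Qed.
End SM.

Lemma card_setsT (T : finType) : #|{set T}| = (2 ^ #|T|)%N.
Proof.
by have := card_powerset [set: T]; rewrite powersetT !cardsT.
Qed.

Section Main.
Local Open Scope ring_scope.
Variables (G : finZmodType) (t : nat).
Local Notation Om := {ffun 'I_t -> G}.

Lemma good_of (a : Om) : (0 < t)%N -> (forall i, t <= #[a i]%g)%N -> X a != 0 -> good a.
Proof.
move=> t0 Hord HX.
have [I /andP[HI HsI]] : exists I, (I != set0) && (sumI I a == 0).
  apply/existsP; apply: contraR HX => /existsPn Hn; rewrite /X big1 // => I HI.
  by have := Hn I; rewrite HI /= /ind => /negbTE ->.
apply/existsP; exists I; rewrite HI HsI /=.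
rewrite /cross_number; apply: (le_trans (y := \sum_(i in I) (t%:R)^-1)).
  apply: ler_sum => i _; rewrite lef_pV2 ?ler_nat ?Hord // posrE ltr0n ?order_gt0 //.
rewrite sumr_const -[_ *+ #|I|]mulr_natr mulrC ler_pdivrMr ?ltr0n // mul1r ler_nat.
by have := max_card (mem I); rewrite card_ord.
Qed.

Lemma card_ne : \sum_(I : {set 'I_t} | I != set0) (1 : rat) = (2 ^ t - 1)%N%:R.
Proof.
rewrite (eq_bigl (fun I => I \in predC1 set0)) // sumr_const cardC1 card_setsT card_ord.
by rewrite subn1.
Qed.

Lemma prob_half (B1 : {set Om}) : (0 < t)%N ->
  (forall a, a \notin B1 -> forall i, t <= #[a i]%g)%N ->
  (4 * #|G| < 2 ^ t)%N -> (4 * #|B1| <= #|G| ^ t)%N -> 1 / 2 <= prob_good G t.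
Proof.
move=> t0 Hord H4 HB1.
have n0 : (0 < #|G|)%N by apply/card_gt0P; exists 0.
have HB2 : (4 * #|[set a : Om | X a == 0%R]| <= #|G| ^ t)%N.
  have := @Bad2 G t; rewrite card_ne.
  have Mpos : (0 : rat) < (2 ^ t - 1)%N%:R by rewrite ltr0n; lia.
  move=> /(_ Mpos) H.
  have : (#|[set a : Om | X a == 0%R]| * (4 * #|G|) <= #|G| ^ t * #|G|)%N.
    rewrite -(ler_nat rat) !natrM; apply: le_trans H.
    by rewrite ler_wpM2l // -natrM ler_nat; lia.
  by move=> h; rewrite -(leq_pmul2r n0) mulnAC mulnC mulnA; lia.
have Hsub : [set a : Om | ~~ good a] \subset B1 :|: [set a : Om | X a == 0].
  apply/subsetP => a; rewrite !inE => Hg; apply/negPn/negP; rewrite negb_or => /andP [Ha HX].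
  by move: Hg; rewrite good_of //; apply: Hord.
have Hc := subset_leq_card Hsub.
have Hu := (leq_card_setU B1 [set a : Om | X a == 0]).1.
have Hcc := cardsC [set a : Om | good a].
have E : ~: [set a : Om | good a] = [set a : Om | ~~ good a] by apply/setP => a; rewrite !inE.
rewrite E in Hcc.
rewrite /prob_good card_ffun card_ord.
rewrite card_ffun card_ord in Hcc.
rewrite ler_pdivlMr ?ltr0n ?expn_gt0 ?n0 //.
have h1 := leq_trans Hc Hu.
move: h1 HB1 HB2 Hcc.
set x1 := #|[set a : Om | ~~ good a]|.
set x2 := #|B1|.
set x3 := #|[set a : Om | X a == 0]|.
set x4 := #|[set a : Om | good a]|.
set x5 := (#|G| ^ t)%N.
move=> h1 h2 h3 h4.
have h : (x5 <= 2 * x4)%N by lia.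
rewrite -(ler_nat rat) natrM in h; lra.
Qed.
End Main.

Definition pr1G p ps k : Gamma p ps k -> 'Z_(p ^ k) :=
  match ps return Gamma p ps k -> 'Z_(p ^ k) with
  | [::] => fun x => x
  | _ :: _ => fun x => x.1 end.

Section Gam.
Local Open Scope ring_scope.
Lemma pr1GD p ps k (x y : Gamma p ps k) : pr1G (x + y) = pr1G x + pr1G y.
Proof. by case: ps x y. Qed.
Lemma pr1G0 p ps k : pr1G (0 : Gamma p ps k) = 0.
Proof. by case: ps. Qed.
Lemma pr1GMn p ps k (x : Gamma p ps k) m : pr1G (x *+ m) = pr1G x *+ m.
Proof. elim: m => [|m IH]; first exact: pr1G0. by rewrite !mulrS pr1GD IH. Qed.
Lemma pr1Gsurj p ps k (y : 'Z_(p ^ k)) : exists x : Gamma p ps k, pr1G x = y.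
Proof. case: ps => [|q ps]; first by exists y. by exists (y, 0). Qed.

Lemma pk_gt1 p k : prime p -> (0 < k)%N -> (1 < p ^ k)%N.
Proof.
move=> pp k0; have p1 := prime_gt1 pp.
by rewrite -(expn0 p) ltn_exp2l.
Qed.

Lemma card_Gamma p ps k : all prime (p :: ps) -> (0 < k)%N ->
  #|Gamma p ps k| = ((p * \prod_(q <- ps) q) ^ k)%N.
Proof.
elim: ps p => [|q ps IH] p /= Hp k0.
  rewrite big_nil muln1 card_ord Zp_cast //; apply: pk_gt1 k0.
  by case/andP: Hp.
case/and3P: Hp => pp pq Hps.
rewrite [LHS](card_prod ('Z_(p ^ k)) (Gamma q ps k)).
have cZ : #|'Z_(p ^ k)| = (p ^ k)%N by rewrite card_ord Zp_cast ?pk_gt1.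
by rewrite cZ IH /= ?pq ?Hps // big_cons -expnMn.
Qed.
End Gam.

Section Gam2.
Local Open Scope ring_scope.

Lemma Zp_val_lt p k (y : 'Z_(p ^ k)) : prime p -> (0 < k)%N -> (val y < p ^ k)%N.
Proof.
move=> pp k0; have h := ltn_ord y.
have e : (Zp_trunc (p ^ k)).+2 = (p ^ k)%N by rewrite Zp_cast ?pk_gt1.
by move: h; rewrite [X in (_ < X)%N -> _]e.
Qed.

Lemma order_bound p ps k j (g : Gamma p ps k) : prime p -> (0 < k)%N -> (j <= k)%N ->
  ~~ (p ^ j %| val (pr1G g))%N -> (p ^ (k - j).+1 <= #[g]%g)%N.
Proof.
move=> pp k0 jk Hnd.
set x := pr1G g; set m := #[g]%g.
have m0 : (0 < m)%N := order_gt0 g.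
have gm : g *+ m = 0 by rewrite -FinRing.zmodXgE expg_order.
have xm : x *+ m = 0 by rewrite /x -pr1GMn gm pr1G0.
have dv : (p ^ k %| val x * m)%N.
  move: xm; rewrite Zp_mulrn => /(congr1 val) /=.
  have e : (Zp_trunc (p ^ k)).+2 = (p ^ k)%N by rewrite Zp_cast ?pk_gt1.
  by rewrite [X in (_ %% X)%N]e => /eqP.
have x0 : (0 < val x)%N.
  by rewrite lt0n; apply: contraNneq Hnd => ->; rewrite dvdn0.
rewrite pfactor_dvdn ?muln_gt0 ?x0 ?m0 // lognM // in dv.
rewrite pfactor_dvdn // -ltnNge in Hnd.
apply: dvdn_leq => //; rewrite pfactor_dvdn //; move: Hnd dv; rewrite -/x; clearbody x m; lia.
Qed.

Lemma small_Zp p k j : prime p -> (j <= k)%N -> (0 < k)%N ->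
  (#|[pred y : 'Z_(p ^ k) | (p ^ j %| val y)%N]| <= p ^ (k - j))%N.
Proof.
move=> pp jk k0.
have p0 : (0 < p)%N := prime_gt0 pp.
pose h (i : 'I_(p ^ (k - j))) : 'Z_(p ^ k) := inZp (i * p ^ j).
apply: (@leq_trans #|[set h i | i in [set: 'I_(p ^ (k - j))]]|); last first.
  by rewrite (leq_trans (leq_imset_card _ _)) // cardsT card_ord.
apply: subset_leq_card; apply/subsetP => y; rewrite inE => Hy.
have yl := Zp_val_lt y pp k0.
have Hi : (val y %/ p ^ j < p ^ (k - j))%N.
  by rewrite ltn_divLR ?expn_gt0 ?p0 // -expnD subnK.
apply/imsetP; exists (Ordinal Hi); first by rewrite inE.
apply: val_inj => /=; rewrite divnK //.
have e : (Zp_trunc (p ^ k)).+2 = (p ^ k)%N by rewrite Zp_cast ?pk_gt1.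
by rewrite [X in (_ %% X)%N]e modn_small.
Qed.

Lemma small_count p ps k j : prime p -> (0 < k)%N -> (j <= k)%N ->
  (#|[set g : Gamma p ps k | p ^ j %| val (pr1G g)]| * p ^ j <= #|Gamma p ps k|)%N.
Proof.
move=> pp k0 jk.
have p0 : (0 < p)%N := prime_gt0 pp.
have := preim_card (@pr1GD p ps k) (@pr1Gsurj p ps k) [pred y : 'Z_(p ^ k) | (p ^ j %| val y)%N].
have cZ : #|'Z_(p ^ k)| = (p ^ k)%N by rewrite card_ord Zp_cast ?pk_gt1.
rewrite cZ => E.
have Hs := small_Zp pp jk k0.
rewrite -(@leq_pmul2l (p ^ (k - j))) ?expn_gt0 ?p0 //.
have -> : [set g : Gamma p ps k | (p ^ j %| val (pr1G g))%N] = [set x | pr1G x \in [pred y : 'Z_(p ^ k) | (p ^ j %| val y)%N]].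
  by apply/setP => g; rewrite !inE.
rewrite mulnCA -expnD subnK // E leq_mul2r Hs orbT //.
Qed.
End Gam2.

Lemma card_nat (T : finType) (A : {set T}) : #|A| = (\sum_a (a \in A : nat))%N.
Proof. by rewrite -sum1_card big_mkcond /=; apply: eq_bigr => a _; case: (a \in A). Qed.

Lemma union_bound (T I : finType) (P : I -> T -> bool) :
  (#|[set a | [exists i, P i a]]| <= \sum_i #|[set a | P i a]|)%N.
Proof.
have -> : (\sum_i #|[set a | P i a]| = \sum_i \sum_a (P i a : nat))%N.
  by apply: eq_bigr => i _; rewrite card_nat; apply: eq_bigr => a _; rewrite inE.
rewrite exchange_big card_nat; apply: leq_sum => a _; rewrite inE.
case: existsP => [[i Hi]|] //=.
by rewrite (bigD1 i) //= Hi.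
Qed.

Lemma coord_count (G : finZmodType) t (S : {pred G}) (i : 'I_t) :
  (#|[set a : {ffun 'I_t -> G} | a i \in S]| * #|G| = #|S| * #|G| ^ t)%N.
Proof.
have fD : forall a b : {ffun 'I_t -> G}, ((a + b)%R i = (a i + b i)%R) by move=> a b; rewrite ffunE.
have fS : forall g : G, exists a : {ffun 'I_t -> G}, a i = g.
  by move=> g; exists [ffun=> g]; rewrite ffunE.
by rewrite (preim_card fD fS) card_ffun card_ord.
Qed.

Lemma pow2_sq m : (4 <= m)%N -> (m * m <= 2 ^ m)%N.
Proof.
elim: m => // m IH H.
case: (ltngtP m 3) => Hm; first by lia.
  by rewrite expnS; have := IH Hm; nia.
by subst m.
Qed.

Lemma num_bound Q k : (2 * (8 * Q + 16) <= k)%N -> (4 * (Q * k + 3) <= 2 ^ k./2)%N.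
Proof.
move=> Hk.
have e := odd_double_half k; rewrite -muln2 in e.
set m := k./2 in e *.
have Hm : (8 * Q + 16 <= m)%N by case: (odd k) e; lia.
have h1 : (m * m <= 2 ^ m)%N by apply: pow2_sq; lia.
have h2 : ((8 * Q + 16) * m <= m * m)%N by rewrite leq_mul2r Hm orbT.
have h3 : (Q * k <= Q * (2 * m + 1))%N by rewrite leq_mul2l; case: (odd k) e; lia.
nia.
Qed.

Lemma gamma_half p ps k : all prime (p :: ps) ->
  (2 * (8 * (p * \prod_(q <- ps) q) + 16) <= k)%N ->
  (1 / 2 <= prob_good (Gamma p ps k) ((p * \prod_(q <- ps) q) * k + 3))%R.
Proof.
move=> Hp; set Q := (p * \prod_(q <- ps) q)%N => Hk.
set t := (Q * k + 3)%N.
have pp : prime p by case/andP: Hp.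
have p2 : (2 <= p)%N := prime_gt1 pp.
have k0 : (0 < k)%N by lia.
set j := k./2.
have e := odd_double_half k; rewrite -muln2 -/j in e.
have jk : (j <= k)%N by case: (odd k) e; lia.
have jk2 : (j <= (k - j).+1)%N by case: (odd k) e; lia.
have Hnum : (4 * t <= 2 ^ j)%N by apply: num_bound.
have H2p : (2 ^ j <= p ^ j)%N by case: j {e jk jk2 Hnum} => [|j']; rewrite ?expn0 // leq_exp2r.
have n0 : (0 < #|Gamma p ps k|)%N by apply/card_gt0P; exists 0%R.
pose B1 := [set a : {ffun 'I_t -> Gamma p ps k} | [exists i, (p ^ j %| val (pr1G (a i)))%N]].
apply: (@prob_half _ _ B1).
- by rewrite /t addn3.
- move=> a; rewrite inE negb_exists => /forallP H i.
  apply: leq_trans (order_bound pp k0 jk (H i)).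
  have h1 : (2 ^ j <= 2 ^ (k - j).+1)%N by apply: leq_pexp2l.
  have h2 : (2 ^ (k - j).+1 <= p ^ (k - j).+1)%N by rewrite leq_exp2r.
  lia.
- rewrite card_Gamma // -/Q /t expnD expnM.
  have HQ : (Q < 2 ^ Q)%N by apply: ltn_expl.
  have : (Q ^ k <= (2 ^ Q) ^ k)%N by rewrite leq_exp2r // ltnW.
  rewrite (_ : 2 ^ 3 = 8)%N //; lia.
- set n := #|Gamma p ps k|.
  pose Sm := [set g : Gamma p ps k | (p ^ j %| val (pr1G g))%N].
  have HS := small_count ps pp k0 jk; rewrite -/n -/Sm in HS.
  have Hc : forall i : 'I_t, (#|[set a : {ffun 'I_t -> Gamma p ps k} | a i \in Sm]| * p ^ j <= n ^ t)%N.
    move=> i; rewrite -(@leq_pmul2r n) // mulnAC coord_count mulnAC.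
    by rewrite mulnC leq_mul2l HS orbT.
  have HU := @union_bound {ffun 'I_t -> Gamma p ps k} 'I_t (fun i a => a i \in Sm).
  have EB : B1 = [set a : {ffun 'I_t -> Gamma p ps k} | [exists i, a i \in Sm]].
    by apply/setP => a; rewrite !inE; apply: eq_existsb => i; rewrite inE.
  have HB : (#|B1| * p ^ j <= t * n ^ t)%N.
    rewrite EB; apply: (leq_trans (leq_mul HU (leqnn _))).
    rewrite big_distrl /=; apply: (@leq_trans (\sum_(i < t) n ^ t)%N); first by apply: leq_sum => i _; exact: Hc.
    by rewrite sum_nat_const card_ord.
  have t0 : (0 < t)%N by rewrite /t addn3.
  have H4 := leq_trans Hnum H2p.
  have : (#|B1| * (4 * t) <= #|B1| * p ^ j)%N by rewrite leq_mul2l H4 orbT.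
  move=> h; have := leq_trans h HB.
  by rewrite mulnA (mulnC t) leq_pmul2r // mulnC.
Qed.

Lemma Pr_half_bound p ps k : all prime (p :: ps) ->
  (2 * (8 * (p * \prod_(q <- ps) q) + 16) <= k)%N ->
  (Pr_half (Gamma p ps k) <= (p * \prod_(q <- ps) q) * k + 3)%N.
Proof.
move=> Hp Hk; rewrite /Pr_half; case: ex_minnP => m _ Hmin.
by apply: Hmin; apply: gamma_half.
Qed.

Section RealPart.
Local Open Scope ring_scope.
Variable R : realType.

Lemma real_part (d A : nat) (P : R) : (1 <= d)%N -> 1 <= P ->
  exists C : R, forall k : nat, (2 <= k)%N ->
    (A * k)%:R <= k%:R ^+ d *
       expR (powR (d.+1`!%:R * P / 2 * lg (k%:R : R)) (d.+1%:R)^-1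
             - d%:R / d.+1%:R * lg (lg (k%:R : R)) + C).
Proof.
move=> d1 P1.
have l2 : 0 < ln (2 : R) by apply: ln_gt0; rewrite ltr1n.
set b := (ln (2 : R))^-1.
have b0 : 0 < b by rewrite invr_gt0.
set D : R := d.+1%:R.
have D0 : 0 < D by rewrite ltr0n.
exists (ln (A.+1%:R) + b ^+ 2 * D ^+ 2) => k k2.
set L := lg (k%:R : R).
have L1 : 1 <= L.
  rewrite /L /lg ler_pdivlMr // mul1r ler_ln ?posrE ?ltr0n //; last by lia.
  by rewrite ler_nat.
set c : R := d.+1`!%:R * P / 2.
have c1 : 1 <= c.
  have f2 : (2 : R) <= d.+1`!%:R.
    rewrite ler_nat; apply: leq_trans (fact_geq _); lia.
  rewrite /c ler_pdivlMr // mul1r; nra.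
set X := c * L.
have XL : L <= X by rewrite /X; nra.
have X0 : 0 < X by apply: lt_le_trans XL; apply: lt_le_trans L1.
set r : R := D^-1.
have r0 : 0 < r by rewrite invr_gt0.
have rD : r * D = 1 by rewrite mulVf // gt_eqF.
set z := ln X.
have zL : ln L <= z by rewrite /z ler_ln ?posrE // (lt_le_trans _ L1).
have lnL0 : 0 <= ln L by apply: ln_ge0.
have y_eq : powR X r = expR (r * z) by rewrite /powR gt_eqF.
have y_ge : 1 + (r * z) ^+ 2 / 2 <= expR (r * z).
  have rz0 : 0 <= r * z by apply: mulr_ge0; [exact: ltW | exact: le_trans lnL0 zL].
  by have := expR_ge1Dxn 1 rz0.
have lgL : lg L = ln L * b by [].
have a01 : 0 <= d%:R / D <= 1.
  apply/andP; split; first by rewrite divr_ge0 ?ler0n ?ltW.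
  by rewrite ler_pdivrMr // mul1r /D ler_nat.
have aL : d%:R / D * lg L <= b * z.
  rewrite lgL; case/andP: a01 => a0 a1.
  have h0 : 0 <= ln L * b by rewrite mulr_ge0 // ltW.
  have h1 : 0 <= (1 - d%:R / D) * (ln L * b) by apply: mulr_ge0 => //; rewrite subr_ge0.
  have h2 : 0 <= b * (z - ln L) by apply: mulr_ge0; [exact: ltW | rewrite subr_ge0].
  apply: (le_trans (ler_wpM2r h0 a1)); rewrite mul1r mulrC; apply: ler_wpM2l => //; exact: ltW.
have key : ln A.+1%:R <= powR X r - d%:R / D * lg L + (ln A.+1%:R + b ^+ 2 * D ^+ 2).
  rewrite y_eq.
  have hz : z = D * (r * z) by rewrite mulrA (mulrC D) rD mul1r.
  set w := r * z in y_ge hz *.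
  have : 0 <= (w - b * D) ^+ 2 by apply: sqr_ge0.
  have : b * z = b * D * w by rewrite hz mulrA.
  move=> h3 h4.
  move: aL y_ge h3 h4; rewrite -exprMn.
  set u := b * D; set aa := d%:R / D * lg L; set E := expR w; set lA := ln A.+1%:R.
  move=> aL y_ge h3 h4.
  rewrite h3 in aL.
  have e : 0 <= w ^+ 2 / 2 - u * w + u ^+ 2.
    have -> : w ^+ 2 / 2 - u * w + u ^+ 2 = (w - u) ^+ 2 / 2 + u ^+ 2 / 2.
      by rewrite !expr2; field.
    by apply: addr_ge0; apply: divr_ge0 => //; exact: sqr_ge0.
  move: e aL y_ge; set W := w ^+ 2 / 2; set UW := u * w; set U2 := u ^+ 2.
  move=> e aL y_ge; clearbody W UW U2 E aa lA; lra.
have Hexp : A.+1%:R <= expR (powR X r - d%:R / D * lg L + (ln A.+1%:R + b ^+ 2 * D ^+ 2)).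
  by rewrite -{1}(lnK (x := A.+1%:R)) ?posrE ?ltr0n // ler_expR.
have H2 : ((A * k)%:R : R) <= k%:R ^+ d * A.+1%:R.
  rewrite -natrX -natrM ler_nat.
  have hk : (k <= k ^ d)%N.
    by have := leq_pexp2l (ltnW k2) d1; rewrite expn1.
  by rewrite mulnC leq_mul.
apply: (le_trans H2); apply: ler_wpM2l; first by rewrite exprn_ge0 // ler0n.
exact: Hexp.
Qed.
End RealPart.

Lemma lg_nat_ge1 (R : realType) (q : nat) : (2 <= q)%N -> (1 <= lg (q%:R : R))%R.
Proof.
move=> q2.
have l2 : (0 < ln (2 : R))%R by apply: ln_gt0; rewrite ltr1n.
rewrite /lg ler_pdivlMr // mul1r ler_ln ?posrE ?ltr0n ?ler_nat //.
by apply: leq_trans q2.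
Qed.

Lemma prod_lg_ge1 (R : realType) (s : seq nat) : all prime s ->
  (1 <= \prod_(q <- s) lg (q%:R : R))%R.
Proof.
elim: s => [|q s IH] /=; first by rewrite big_nil.
case/andP => pq Hs; rewrite big_cons; apply: mulr_ege1; last exact: IH.
by apply: lg_nat_ge1; apply: prime_gt1.
Qed.

Local Open Scope ring_scope.

Theorem theorem1p4 (R : realType) (p : nat) (ps : seq nat) :
  all prime (p :: ps) ->
  exists C : R, exists K0 : nat, forall k : nat, (K0 <= k)%N ->
    (Pr_half (Gamma p ps k))%:R
      <= k%:R ^+ size (p :: ps) *
         expR (powR ((size (p :: ps)).+1`!%:R
                       * (\prod_(q <- p :: ps) lg (q%:R : R)) / 2
                       * lg (k%:R : R))
                    ((size (p :: ps)).+1%:R)^-1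
               - (size (p :: ps))%:R / (size (p :: ps)).+1%:R
                   * lg (lg (k%:R : R))
               + C).
Proof.
move=> Hp.
set Q := (p * \prod_(q <- ps) q)%N.
have [C HC] := @real_part R (size (p :: ps)) (Q + 3) (\prod_(q <- p :: ps) lg (q%:R : R))
  isT (prod_lg_ge1 R Hp).
exists C, (maxn 2 (2 * (8 * Q + 16))) => k Hk.
rewrite geq_max in Hk; case/andP: Hk => k2 kK.
apply: le_trans (HC k k2); rewrite ler_nat.
apply: (leq_trans (Pr_half_bound Hp kK)); rewrite -/Q.
rewrite mulnDl leq_add2l; apply: leq_pmulr; exact: ltnW.
Qed.
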